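(* Let $M$ be an observable FSM with $n$ states, all reachable, such that the initial state $s_0$ is the only d-reachable state of $M$ and no two distinct states of $M$ are r-distinguishable. Let $m\ge n$. Then (i) every $\bar x/\bar y\in L_M(s_0)$ of length $mn$ has a prefix $\pi$ with $term(s_0,\pi,m)\neq\varnothing$, so $Tr(s_0,m)\subseteq\bigcup_{i=0}^{mn}\Sigma_I^i$; and (ii) every test suite $T$ produced by $\textsc{GenerateTestSuite}(M,m)$ satisfies $|T|\le|\Sigma_I|^{mn}$.
   Context: FSMs and notation. An FSM is $M=(S,s_0,\Sigma_I,\Sigma_O,h_M)$ with finite state set $S$, initial state $s_0$, finite input/output alphabets and $h_M\subseteq S\times\Sigma_I\times\Sigma_O\times S$. IO sequences are written $\bar x/\bar y$. $L_M(s)$ is the set of IO sequences $x_1\dots x_k/y_1\dots y_k$ such that there are states $s=q_0,\dots,q_k$ with $(q_{i-1},x_i,y_i,q_i)\in h_M$; $L(M)=L_M(s_0)$. $out(s,x)=\{y\mid\exists s'.(s,x,y,s')\in h_M\}$. $M$ is observable if for all $s,x,y$ at most one $s'$ has $(s,x,y,s')\in h_M$; then $s\text{-after-}\alpha$ is the unique state reached from $s$ by $\alpha\in L_M(s)$. $\Delta_M(s)=\{x\mid out(s,x)\neq\varnothing\}$. $\mathrm{Pref}$ denotes the set of prefixes (including $\epsilon$), lifted to sets; $A.B=\{a.b\mid a\in A,b\in B\}$ with $A.\varnothing=A$. d-reachability and state cover. $\bar x$ is strongly defined in $M$ if for every prefix $\bar x_1.x$ of $\bar x$ ($x\in\Sigma_I$)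 and every $\bar x_1/\bar y_1\in L(M)$, $x\in\Delta_M(s_0\text{-after-}\bar x_1/\bar y_1)$. $\bar x$ d-reaches $s$ if $\bar x$ is strongly defined and $\{s_0\text{-after-}\bar x/\bar y\mid \bar x/\bar y\in L(M)\}=\{s\}$. For $S'\subseteq S$, $\widehat{S'}$ is the set of states in $S'$ d-reached by some input sequence. A state cover $V$ is a set consisting of $\epsilon$ (which d-reaches $s_0$) and, for every other d-reachable state, exactly one input sequence d-reaching it; for $s\in\widehat S$ let $\bar v_s\in V$ be the element d-reaching $s$. $V'=\{\bar x/\bar y\in L(M)\mid \bar x\in V\}$. r-distinguishability. Every $W\subseteq\Sigma_I^*$ r(0)-distinguishes states $s_1,s_2$ with $\Delta_M(s_1)\neq\Delta_M(s_2)$. For $k\ge0$, $W$ r($k+1$)-distinguishes $s_1,s_2$ if it r($k$)-distinguishes them, or there is $x\in\Delta_M(s_1)\cap\Delta_M(s_2)\cap\mathrm{Pref}(W)$ such that for every $y\in out(s_1,x)\cap out(s_2,x)$ some $W'$ with $\{x\}.W'\subseteq\mathrm{Pref}(W)$ r($k$)-distinguishes $s_1\text{-after-}x/y$ and $s_2\text{-after-}x/y$. $W$ r-distinguishes $s_1,s_2$ if it r($k$)-distinguishes them for some $k$; states are r-distinguishable if some $W$ r-distinguishes them. $S_D$ is the set of all maximal (w.r.t. inclusion) subsets of $S$ whose elements are pairwise r-distinguishable (a state r-distinguishable from no other state yields a singleton). Termination and traversal sets. For $s\in\widehat S$, $\bar x/\bar y\in L_M(s)$ and $S'\in S_D$,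 say $S'$ terminates $\bar x/\bar y$ for $s$ and $m$ if the number of nonempty prefixes $\pi$ of $\bar x/\bar y$ with $s\text{-after-}\pi\in S'$ equals $m-|\widehat{S'}|+1$ and no proper prefix of $\bar x/\bar y$ is terminated for $s$ and $m$ by any element of $S_D$. $term(s,\bar x/\bar y,m)$ is the set of such $S'$. $Tr(s,m)=\mathrm{Pref}\{\bar x\mid\exists\bar y.\ \bar x/\bar y\in L_M(s)\wedge term(s,\bar x/\bar y,m)\neq\varnothing\}$. Procedure $\textsc{GenerateTestSuite}(M,m)$: (1) Choose a state cover $V$, form $V'$, and set $T:=\bigcup_{s\in\widehat S}\{\bar v_s\}.Tr(s,m)$. (2) Let $D=\{(s,\bar x/\bar y)\mid s\in\widehat S,\ \bar x/\bar y\in L_M(s),\ term(s,\bar x/\bar y,m)\neq\varnothing\}$. For each $(s,\bar x/\bar y)\in D$: choose some $S_i\in term(s,\bar x/\bar y,m)$; then for every pair of traces $\bar x_1/\bar y_1,\bar x_2/\bar y_2$ in $V'\cup\{\beta.\pi\mid \beta\in V'\text{ with input portion }\bar v_s,\ \pi\in\mathrm{Pref}(\bar x/\bar y)\}$, let $s_j=s_0\text{-after-}\bar x_j/\bar y_j$; if $s_1\neq s_2$ and $s_1,s_2\in S_i$, let $W'=\{\bar x'\mid \bar x_1.\bar x'\in\mathrm{Pref}(T)\text{ and }\bar x_2.\bar x'\in\mathrm{Pref}(T)\}$ (for the current $T$); if $W'$ does not r-distinguish $s_1,s_2$, choose any $W$ that r-distinguishes $s_1,s_2$ and set $T:=T\cup\{\bar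 x_1,\bar x_2\}.W$. (3) Finally remove from $T$ every sequence that is a proper prefix of another element of $T$, and return $T$. *)

(* Defs.v *)
(* Finite state machines, d-reachability, r-distinguishability,
   termination, traversal sets and the (nondeterministic) procedure
   GenerateTestSuite, modelled as a relation between M, m and the possible outputs T. *)
From mathcomp Require Import all_boot.
From mathcomp Require Import boolp.

Set Implicit Arguments.
Unset Strict Implicit.
Unset Printing Implicit Defensive.

Section FSM.

(* An FSM M = (S, s0, Sigma_I, Sigma_O, h_M) with h_M given by its characteristic
   function h s x y s' <-> (s,x,y,s') \in h_M. *)
Variables (S I O : finType) (s0 : S) (h : S -> I -> O -> S -> bool).

(* IO sequences x1..xk/y1..yk are sequences of (input, output) pairs. *)
Definition trace := seq (I * O).
Definition ins (t : trace) : seq I := map fst t.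

Definition out (s : S) (x : I) : pred O := fun y => [exists s', h s x y s'].
Definition Delta (s : S) : pred I := fun x => [exists y, out s x y].

Definition observable : Prop :=
  forall s x y s1 s2, h s x y s1 -> h s x y s2 -> s1 = s2.

Definition reach (s : S) (t : trace) : {set S} :=
  foldl (fun (A : {set S}) (p : I * O) =>
           [set s' | [exists q in A, h q p.1 p.2 s']]) [set s] t.

Definition inL (s : S) (t : trace) : bool := reach s t != set0.

(* s-after-t : the (for observable M, unique) state reached from s by t *)
Definition after (s : S) (t : trace) : S := odflt s [pick q in reach s t].

Definition is_prefix (T : Type) (u v : seq T) : Prop := exists k, u = take k v.
Definition is_proper_prefix (T : Type) (u v : seq T) : Prop :=
  exists2 k, k < size v & u = take k v.
Definition Pref (W : seq I -> Prop) : seq I -> Prop :=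
  fun u => exists2 w, W w & is_prefix u w.

Definition strongly_defined (xs : seq I) : Prop :=
  forall xs1 x rest, xs = xs1 ++ x :: rest ->
  forall t, ins t = xs1 -> inL s0 t -> Delta (after s0 t) x.

Definition d_reaches (xs : seq I) (s : S) : Prop :=
  strongly_defined xs /\
  (exists t, ins t = xs /\ inL s0 t) /\
  (forall t, ins t = xs -> inL s0 t -> after s0 t = s).

Definition d_reachable (s : S) : Prop := exists xs, d_reaches xs s.

Definition dhat (A : {set S}) : {set S} := [set s in A | `[< d_reachable s >] ].

Fixpoint rdist (k : nat) (W : seq I -> Prop) (s1 s2 : S) : Prop :=
  match k with
  | 0 => exists x, Delta s1 x != Delta s2 x
  | k'.+1 =>
      rdist k' W s1 s2 \/
      exists x, [/\ Delta s1 x, Delta s2 x, Pref W [:: x] &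
        forall y, out s1 x y -> out s2 x y ->
          exists W' : seq I -> Prop,
            (forall w, W' w -> Pref W (x :: w)) /\
            rdist k' W' (after s1 [:: (x, y)]) (after s2 [:: (x, y)])]
  end.

Definition r_distinguishes (W : seq I -> Prop) (s1 s2 : S) : Prop :=
  exists k, rdist k W s1 s2.

Definition r_distinguishable (s1 s2 : S) : Prop :=
  exists W, r_distinguishes W s1 s2.

Definition pairwise_rdist (A : {set S}) : Prop :=
  forall s1 s2, s1 \in A -> s2 \in A -> s1 != s2 -> r_distinguishable s1 s2.

Definition in_SD (A : {set S}) : Prop :=
  pairwise_rdist A /\ (forall B, pairwise_rdist B -> A \subset B -> B = A).

Definition term_count (s : S) (t : trace) (m : nat) (S' : {set S}) : Prop :=
  in_SD S' /\
  count (fun k => after s (take k t) \in S') (iota 1 (size t)) = m - #|dhat S'| + 1.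

(* no_term_before s t j : none of the prefixes take i t (i < j) of t is
   terminated (for s and m) by any element of S_D; this unrolls the recursive
   clause "no proper prefix is terminated". *)
Fixpoint no_term_before (s : S) (t : trace) (m : nat) (j : nat) : Prop :=
  match j with
  | 0 => True
  | i.+1 => no_term_before s t m i /\
            ~ (exists S'', term_count s (take i t) m S'' /\ no_term_before s t m i)
  end.

Definition term (s : S) (t : trace) (m : nat) (S' : {set S}) : Prop :=
  inL s t /\ term_count s t m S' /\ no_term_before s t m (size t).

Definition Tr (s : S) (m : nat) : seq I -> Prop :=
  Pref (fun xs => exists t, [/\ ins t = xs, inL s t & exists S', term s t m S']).

Definition Tset := seq I -> Prop.

(* a state cover, given as the map s |-> v_s on d-reachable states *)
Definition state_cover (v : S -> seq I) : Prop :=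
  v s0 = [::] /\ forall s, d_reachable s -> d_reaches (v s) s.

Definition inV (v : S -> seq I) (xs : seq I) : Prop :=
  exists2 s, d_reachable s & xs = v s.

Definition inV' (v : S -> seq I) (t : trace) : Prop := inL s0 t /\ inV v (ins t).

(* initial T of step (1) *)
Definition T_init (v : S -> seq I) (m : nat) : Tset :=
  fun z => exists s, d_reachable s /\ exists2 w, Tr s m w & z = v s ++ w.

(* the set D of step (2) *)
Definition inD (m : nat) (p : S * trace) : Prop :=
  [/\ d_reachable p.1, inL p.1 p.2 & exists S', term p.1 p.2 m S'].

Definition pair_traces (v : S -> seq I) (s : S) (t : trace) : trace -> Prop :=
  fun z => inV' v z \/
    exists beta pi, [/\ inV' v beta, ins beta = v s, is_prefix pi t & z = beta ++ pi].

Definition Wprime (T : Tset) (x1 x2 : seq I) : Tset :=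
  fun x' => Pref T (x1 ++ x') /\ Pref T (x2 ++ x').

(* processing of one pair of traces with the chosen S_i, T ~> T' *)
Definition pair_step (Si : {set S}) (p : trace * trace) (T T' : Tset) : Prop :=
  let s1 := after s0 p.1 in let s2 := after s0 p.2 in
  let x1 := ins p.1 in let x2 := ins p.2 in
  let cond := [/\ s1 != s2, s1 \in Si, s2 \in Si &
                  ~ r_distinguishes (Wprime T x1 x2) s1 s2] in
  (cond -> exists W : Tset, r_distinguishes W s1 s2 /\
      forall z, T' z <-> (T z \/ exists2 w, W w & (z = x1 ++ w \/ z = x2 ++ w))) /\
  (~ cond -> forall z, T' z <-> T z).

Fixpoint chain (A : Type) (R : A -> Tset -> Tset -> Prop) (l : seq A) (T T' : Tset)
    : Prop :=
  match l with
  | [::] => forall z, T' z <-> T z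
  | a :: l' => exists Tm, R a T Tm /\ chain R l' Tm T'
  end.

(* processing of one element (s, t) of D *)
Definition d_step (v : S -> seq I) (m : nat) (p : S * trace) (T T' : Tset) : Prop :=
  exists Si, term p.1 p.2 m Si /\
  exists l : seq (trace * trace),
    (forall q, q \in l -> pair_traces v p.1 p.2 q.1 /\ pair_traces v p.1 p.2 q.2) /\
    (forall z1 z2, pair_traces v p.1 p.2 z1 -> pair_traces v p.1 p.2 z2 ->
        ((z1, z2) \in l) \/ ((z2, z1) \in l)) /\
    chain (pair_step Si) l T T'.

Definition GenerateTestSuite (m : nat) (T : Tset) : Prop :=
  exists v, state_cover v /\
  exists d : seq (S * trace), uniq d /\ (forall p, p \in d <-> inD m p) /\
  exists T2, chain (d_step v m) d (T_init v m) T2 /\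
  forall z, T z <-> (T2 z /\ ~ exists2 z', T2 z' & is_proper_prefix z z').

End FSM.

(* Main.v *)
Require Import Defs.
From mathcomp Require Import all_boot.
From mathcomp Require Import boolp.
From mathcomp Require Import zify.

Lemma ivt_nat (c : nat -> nat) (thr N : nat) :
  c 0 = 0 -> (forall k, c k.+1 <= (c k).+1) -> thr <= c N ->
  exists2 k, k <= N & c k = thr.
Proof.
move=> c0 cS; elim: N => [|N IH] H.
  by exists 0 => //; move: H; rewrite c0; case: thr.
case: (leqP thr (c N)) => H2.
  by case: (IH H2) => k Hk Ek; exists k => //; apply: leqW.
exists N.+1 => //; have := cS N; lia.
Qed.

Lemma sum_count_all (S : finType) (f : nat -> S) (l : seq nat) :
  \sum_(s : S) count (fun j => f j == s) l = size l.
Proof.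
elim: l => [|a l IH] /=; first by rewrite big1.
rewrite big_split /= IH -add1n; congr (_ + _).
rewrite (bigD1 (f a)) //= eqxx big1 // => s Hs.
by rewrite eq_sym (negbTE Hs).
Qed.



Lemma inL_take (S I O : finType) (h : S -> I -> O -> S -> bool) s (t : trace I O) k :
  inL h s t -> inL h s (take k t).
Proof.
rewrite /inL /reach -{1}(cat_take_drop k t) foldl_cat.
set A := foldl _ _ (take k t).
apply: contra => /eqP ->.
elim: (drop k t) => [|p l IH] //=.
suff -> : [set s' | [exists q in set0, h q p.1 p.2 s']] = set0 :> {set S} by [].
apply/setP => x; rewrite !inE; apply/existsP => -[q]; by rewrite inE.
Qed.
Arguments inL_take {S I O h s t} k.


Lemma no_term_before_spec (S I O : finType) s0 (h : S -> I -> O -> S -> bool) s t m j :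
  no_term_before s0 h s t m j -> forall i, i < j ->
  ~ exists S'', term_count s0 h s (take i t) m S''.
Proof.
elim: j => [|j IH] //= [H1 H2] i; rewrite ltnS leq_eqVlt => /orP[/eqP ->|Hi].
  by move=> [S'' HS]; apply: H2; exists S''.
exact: IH.
Qed.
Arguments no_term_before_spec {S I O s0 h s t m j}.


Lemma no_term_before_intro (S I O : finType) s0 (h : S -> I -> O -> S -> bool) s t m j :
  (forall i, i < j -> ~ exists S'', term_count s0 h s (take i t) m S'') ->
  no_term_before s0 h s t m j.
Proof.
elim: j => [|j IH] //= H; split.
  by apply: IH => i Hi; apply: H; apply: leqW.
by move=> [S'' [HS _]]; apply: (H j) => //; exists S''.
Qed.

Lemma in_SD1 (S I O : finType) (h : S -> I -> O -> S -> bool) (s : S) :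
  (forall s1 s2 : S, s1 != s2 -> ~ r_distinguishable h s1 s2) ->
  in_SD h [set s].
Proof.
move=> noRD; split.
  by move=> s1 s2; rewrite !inE => /eqP -> /eqP ->; rewrite eqxx.
move=> B HB sub; apply/setP => x; rewrite inE.
have sB : s \in B by apply: (subsetP sub); rewrite inE.
apply/idP/eqP => [xB|->//].
by apply/eqP/negPn/negP => Hne; apply: (noRD x s Hne); apply: HB.
Qed.

Lemma in_SD_eq (S I O : finType) (h : S -> I -> O -> S -> bool) (A : {set S}) :
  (forall s1 s2 : S, s1 != s2 -> ~ r_distinguishable h s1 s2) ->
  in_SD h A -> forall s1 s2, s1 \in A -> s2 \in A -> s1 = s2.
Proof.
move=> noRD [HA _] s1 s2 H1 H2; apply/eqP/negPn/negP => Hne.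
exact: (noRD _ _ Hne (HA _ _ H1 H2 Hne)).
Qed.

Lemma dhat1 (S I O : finType) s0 (h : S -> I -> O -> S -> bool) (s : S) :
  (forall s : S, d_reachable s0 h s <-> s = s0) ->
  #|dhat s0 h [set s]| = (s == s0).
Proof.
move=> Hd.
have -> : dhat s0 h [set s] = if s == s0 then [set s] else set0.
  apply/setP => x; rewrite /dhat !inE.
  case: (s =P s0) => [->|Hne]; rewrite ?inE.
    case: (x =P s0) => [->|] //=; apply/asboolP; exact/Hd.
  rewrite andbC; case: (x =P s) => [->|_] /=; rewrite ?andbF ?andbT //.
  by apply/negP => /asboolP /Hd.
by case: (s == s0); rewrite ?cards1 ?cards0.
Qed.

Lemma pigeon (S I O : finType) s0 (h : S -> I -> O -> S -> bool) n m (t : trace I O) :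
  #|S| = n ->
  (forall s : S, d_reachable s0 h s <-> s = s0) ->
  (forall s1 s2 : S, s1 != s2 -> ~ r_distinguishable h s1 s2) ->
  n <= m -> m * n <= size t ->
  exists2 k, k <= m * n & exists S' : {set S}, term_count s0 h s0 (take k t) m S'.
Proof.
move=> Hn Hd noRD Hnm Hsz.
have n0 : 0 < n by rewrite -Hn; apply/card_gt0P; exists s0.
set N := m * n.
set f := fun j => after h s0 (take j t).
set cnt := fun s => count (fun j => f j == s) (iota 1 N).
have [s Hs|Hnone] := pickP (fun s => m - (s == s0) + 1 <= cnt s); last first.
  exfalso.
  have Hsum := sum_count_all S f (iota 1 N); rewrite size_iota in Hsum.
  have Hle : \sum_(s : S) cnt s <= \sum_(s : S) (m - (s == s0)).
    apply: leq_sum => s _; have := Hnone s; rewrite /= addn1 ltnNge => /negbT.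
    by rewrite negbK.
  have E1 : \sum_(s : S) m = m + \sum_(s | s != s0) m by rewrite (bigD1 s0).
  have E2 : \sum_(s : S) (m - (s == s0)) = (m - 1) + \sum_(s | s != s0) m.
    rewrite (bigD1 s0) //= eqxx; congr (_ + _); apply: eq_bigr => s /negbTE ->.
    by rewrite subn0.
  rewrite sum_nat_const in E1.
  have HX : #|[pred x : S | true]| = n by rewrite -Hn; apply: eq_card.
  rewrite HX E2 in Hle E1.
  move: (\sum_(s | s != s0) m) E1 Hle => X E1 Hle.
  have : N <= m - 1 + X by rewrite -{1}Hsum.
  rewrite /N; lia.
set c := fun k => count (fun j => f j == s) (iota 1 k).
have [k Hk Ek] : exists2 k, k <= N & c k = m - (s == s0) + 1.
  apply: ivt_nat => //.
  move=> k; rewrite /c -[k.+1]addn1 iotaD count_cat /= addn0.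
  by case: (_ == _); rewrite ?addn1 ?addn0.
exists k => //; exists [set s]; split; first exact: in_SD1.
rewrite dhat1 // size_takel; last by apply: leq_trans Hsz.
rewrite -Ek /c; apply: eq_in_count => j; rewrite mem_iota => /andP[_ Hj].
by rewrite inE /f take_takel // -ltnS -(addn1 k) addnC.
Qed.
Arguments pigeon {S I O s0 h n m t}.


Lemma part_ia (S I O : finType) s0 (h : S -> I -> O -> S -> bool) n m (t : trace I O) :
  #|S| = n ->
  (forall s : S, d_reachable s0 h s <-> s = s0) ->
  (forall s1 s2 : S, s1 != s2 -> ~ r_distinguishable h s1 s2) ->
  n <= m -> inL h s0 t -> m * n <= size t ->
  exists2 k, k <= m * n & exists S' : {set S}, term s0 h s0 (take k t) m S'.
Proof.
move=> Hn Hd noRD Hnm HL Hsz.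
have [k0 Hk0 HP0] := pigeon Hn Hd noRD Hnm Hsz.
pose P k := `[< exists S' : {set S}, term_count s0 h s0 (take k t) m S' >].
have exP : exists k, P k by exists k0; apply/asboolP.
case: (ex_minnP exP) => k /asboolP [S' HS'] Hmin.
have Hkk0 : k <= k0 by apply: Hmin; apply/asboolP.
have HkN : k <= m * n := leq_trans Hkk0 Hk0.
exists k => //; exists S'; split; first exact: inL_take.
split => //.
rewrite size_takel; last exact: leq_trans Hsz.
apply: no_term_before_intro => i Hi [S'' HS''].
have : k <= i by apply: Hmin; apply/asboolP; exists S''; rewrite -(take_takel t (ltnW Hi)).
by rewrite leqNgt Hi.
Qed.
Arguments part_ia {S I O s0 h n m t}.


Lemma term_size (S I O : finType) s0 (h : S -> I -> O -> S -> bool) n m (t : trace I O) S' :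
  #|S| = n ->
  (forall s : S, d_reachable s0 h s <-> s = s0) ->
  (forall s1 s2 : S, s1 != s2 -> ~ r_distinguishable h s1 s2) ->
  n <= m -> term s0 h s0 t m S' -> size t <= m * n.
Proof.
move=> Hn Hd noRD Hnm [HL [Hc Hntb]].
rewrite leqNgt; apply/negP => Hlt.
have [k Hk [S'' HS'']] := pigeon Hn Hd noRD Hnm (ltnW Hlt).
apply: (no_term_before_spec Hntb k (leq_ltn_trans Hk Hlt)).
by exists S''.
Qed.
Arguments term_size {S I O s0 h n m t S'}.


Lemma Tr_size (S I O : finType) s0 (h : S -> I -> O -> S -> bool) n m (xs : seq I) :
  #|S| = n ->
  (forall s : S, d_reachable s0 h s <-> s = s0) ->
  (forall s1 s2 : S, s1 != s2 -> ~ r_distinguishable h s1 s2) ->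
  n <= m -> Tr s0 h s0 m xs -> size xs <= m * n.
Proof.
move=> Hn Hd noRD Hnm [w [t [Ht HL [S' HS']]] [k ->]].
rewrite size_take_min; apply: leq_trans (geq_minr _ _) _.
rewrite -Ht size_map; exact: term_size HS'.
Qed.
Arguments Tr_size {S I O s0 h n m xs}.


Lemma chain_id (I : finType) (A : Type) (R : A -> Tset I -> Tset I -> Prop) l T T' :
  (forall a T T', R a T T' -> forall z, T' z <-> T z) ->
  chain R l T T' -> forall z, T' z <-> T z.
Proof.
move=> HR; elim: l T => [|a l IH] T //= [Tm [HRa Hc]] z.
rewrite (IH _ Hc z); exact: HR HRa z.
Qed.
Arguments chain_id {I A R l T T'}.


Lemma d_step_id (S I O : finType) s0 (h : S -> I -> O -> S -> bool) v m p T T' :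
  (forall s1 s2 : S, s1 != s2 -> ~ r_distinguishable h s1 s2) ->
  d_step s0 h v m p T T' -> forall z, T' z <-> T z.
Proof.
move=> noRD [Si [[_ [[[HSD _] _] _]] [l [_ [_ Hc]]]]].
apply: (chain_id _ Hc) => q T1 T2 [_ Hn]; apply: Hn.
move=> [Hne H1 H2 _]; exact: (noRD _ _ Hne (HSD _ _ H1 H2 Hne)).
Qed.
Arguments d_step_id {S I O s0 h v m p T T'}.


Lemma T_init_iff (S I O : finType) s0 (h : S -> I -> O -> S -> bool) v m z :
  (forall s : S, d_reachable s0 h s <-> s = s0) ->
  state_cover s0 h v ->
  T_init s0 h v m z <-> Tr s0 h s0 m z.
Proof.
move=> Hd [Hv0 _]; split.
  by move=> [s [/Hd -> [w Hw ->]]]; rewrite Hv0.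
by move=> Hz; exists s0; split; [exact/Hd | exists z; rewrite ?Hv0].
Qed.
Arguments T_init_iff {S I O s0 h v m z}.


Fixpoint allseq (I : finType) (k : nat) : seq (seq I) :=
  if k is k'.+1 then [::] :: [seq x :: s | x <- enum I, s <- allseq I k']
  else [:: [::]].

Fixpoint exseq (I : finType) (k : nat) : seq (seq I) :=
  if k is k'.+1 then [seq x :: s | x <- enum I, s <- exseq I k']
  else [:: [::]].

Lemma allseqP (I : finType) k (s : seq I) : size s <= k -> s \in allseq I k.
Proof.
elim: k s => [|k IH] [|x s] //=; rewrite ?inE //= ltnS => Hs.
apply: allpairs_f; [exact: mem_enum | exact: IH].
Qed.
Arguments allseqP {I k s}.


Lemma exseqP (I : finType) k (s : seq I) : size s = k -> s \in exseq I k.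
Proof.
elim: k s => [|k IH] [|x s] //=; rewrite ?inE //= => -[Hs].
apply: allpairs_f; [exact: mem_enum | exact: IH].
Qed.
Arguments exseqP {I k s}.


Lemma size_exseq (I : finType) k : size (exseq I k) = #|I| ^ k.
Proof.
elim: k => [|k IH] //=; by rewrite size_allpairs IH -cardE expnS.
Qed.

Theorem mainTheorem4 (S I O : finType) (s0 : S) (h : S -> I -> O -> S -> bool)
    (n m : nat) :
  observable h ->
  #|S| = n ->
  (forall s : S, exists t, inL h s0 t /\ after h s0 t = s) ->
  (forall s : S, d_reachable s0 h s <-> s = s0) ->
  (forall s1 s2 : S, s1 != s2 -> ~ r_distinguishable h s1 s2) ->
  n <= m ->
  ((forall t : trace I O, inL h s0 t -> size t = m * n ->
      exists2 k, k <= size t & exists S' : {set S}, term s0 h s0 (take k t) m S')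
   /\ (forall xs : seq I, Tr s0 h s0 m xs -> size xs <= m * n))
  /\
  (forall T : seq I -> Prop, GenerateTestSuite s0 h m T ->
     exists l : seq (seq I),
       [/\ uniq l, (forall z, T z <-> z \in l) & size l <= #|I| ^ (m * n)]).
Proof.
move=> Hobs Hn Hreach Hd noRD Hnm.
split; [split|].
- move=> t HL Hsz.
  have [k Hk HS] := part_ia Hn Hd noRD Hnm HL (eq_leq (esym Hsz)).
  by exists k; rewrite ?Hsz.
- move=> xs; exact: Tr_size Hn Hd noRD Hnm.
move=> T [v [Hcov [d [_ [_ [T2 [Hc HT]]]]]]].
have HT2 : forall z, T2 z <-> Tr s0 h s0 m z.
  move=> z; rewrite (chain_id (fun a T1 T3 H => d_step_id noRD H) Hc z).
  exact: T_init_iff.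
set N := m * n.
have Tsz : forall z, T z -> size z <= N.
  move=> z /HT [/HT2 Hz _]; exact: Tr_size Hn Hd noRD Hnm Hz.
set l := undup [seq z <- allseq I N | `[< T z >]].
have memT : forall z, z \in l -> T z.
  by move=> z; rewrite mem_undup mem_filter => /andP[/asboolP].
exists l; split.
- exact: undup_uniq.
- move=> z; split => [Hz|/memT //].
  by rewrite mem_undup mem_filter (allseqP (Tsz _ Hz)) andbT; apply/asboolP.
case El: l => [//|z0 l'].
have : z0 \in l by rewrite El inE eqxx.
move=> /memT /HT [/HT2 [w [t [_ _ [S' [_ [[_ Hcnt] _]]]]] _] _].
case: t Hcnt => [|p t'] Hcnt; first by rewrite /= addn1 in Hcnt.
pose x0 := p.1.
pose pad := fun z : seq I => z ++ nseq (N - size z) x0.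
have helper : forall z1 z2, z1 \in l -> z2 \in l -> size z1 <= size z2 ->
    pad z1 = pad z2 -> z1 = z2.
  move=> z1 z2 H1 H2 Hle Hp.
  have E : z1 = take (size z1) z2.
    by rewrite -(takel_cat (nseq (N - size z2) x0) Hle) -/(pad z2) -Hp take_size_cat.
  case: (ltnP (size z1) (size z2)) => Hlt.
    exfalso; have [_ Hnp] := (HT z1).1 (memT _ H1); apply: Hnp.
    exists z2; first exact: ((HT z2).1 (memT _ H2)).1.
    by exists (size z1).
  by rewrite E take_oversize.
have inj : {in l &, injective pad}.
  move=> z1 z2 H1 H2 Hp; case: (leqP (size z1) (size z2)) => Hs.
    exact: helper.
  by apply/esym; apply: helper => //; apply: ltnW.
rewrite -El -(size_map pad) -(size_exseq I N) uniq_leq_size //.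
  by rewrite map_inj_in_uniq // undup_uniq.
move=> y /mapP [z Hz ->]; apply: exseqP.
rewrite size_cat size_nseq; have := Tsz z (memT _ Hz); lia.
Qed.
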